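(* Let $F$ be a graph on $\binom{n}{k}$ vertices with $k=n/2$, and let $\mathcal{R}$ be a $k$-reconstruction family of $F$. Then $\overline{\mathcal{R}}=\{V(F)\setminus X:X\in\mathcal{R}\}$ is a $k$-reconstruction family of $F$.
   Context: For a graph $F$ on $\binom{n}{k}$ vertices and a family $\mathcal{R}$ of subsets of $V(F)$, let $S_{\mathcal{R}}(A)=\{X\in\mathcal{R}:A\in X\}$ for $A\in V(F)$. $\mathcal{R}$ is a $k$-reconstruction family of $F$ if (1) $|X|=\binom{n-1}{k-1}$ for all $X\in\mathcal{R}$; (2) $|S_{\mathcal{R}}(A)|=k$ for all $A\in V(F)$; (3) for every edge $AB$ of $F$, $|S_{\mathcal{R}}(A)\cap S_{\mathcal{R}}(B)|=k-1$. *)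

(* Defs.v *)
From mathcomp Require Import all_boot.
Set Implicit Arguments. Unset Strict Implicit. Unset Printing Implicit Defensive.

Definition simple_graph (T : finType) (F : rel T) : Prop :=
  symmetric F /\ irreflexive F.

Definition S_R (T : finType) (R : {set {set T}}) (A : T) : {set {set T}} :=
  [set X in R | A \in X].

Definition reconstruction_family (T : finType) (n k : nat) (F : rel T)
    (R : {set {set T}}) : Prop :=
  [/\ (forall X, X \in R -> #|X| = 'C(n.-1, k.-1)),
      (forall A : T, #|S_R R A| = k)
    & (forall A B : T, F A B -> #|S_R R A :&: S_R R B| = k.-1)].

Definition compl_family (T : finType) (R : {set {set T}}) : {set {set T}} :=
  [set ~: X | X in R].

(* Main.v *)
Require Import Defs.
From mathcomp Require Import all_boot.
From mathcomp Require Import zify.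

Lemma S_compl (T : finType) (R : {set {set T}}) (A : T) :
  S_R (compl_family R) A = [set ~: X | X in R :\: S_R R A].
Proof.
apply/setP => Y; rewrite /S_R /compl_family !inE.
rewrite -(setCK Y) !mem_imset; try exact: setC_inj.
by rewrite setCK !inE; case: (A \in Y); case: (~: Y \in R).
Qed.

Lemma card_SC (T : finType) (R : {set {set T}}) (A : T) :
  #|S_R (compl_family R) A| = #|R| - #|S_R R A|.
Proof.
rewrite S_compl card_imset; last exact: setC_inj.
rewrite cardsD; congr (_ - _); apply: eq_card => X.
by rewrite !inE; case: (X \in R); rewrite ?andbT.
Qed.

Lemma card_SCI (T : finType) (R : {set {set T}}) (A B : T) :
  #|S_R (compl_family R) A :&: S_R (compl_family R) B| =
  #|R| - (#|S_R R A| + #|S_R R B| - #|S_R R A :&: S_R R B|).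
Proof.
rewrite !S_compl -imsetI; last by move=> x y _ _; exact: setC_inj.
rewrite card_imset; last exact: setC_inj.
rewrite -cardsU -setDUr cardsD; congr (_ - _); apply: eq_card => X.
by rewrite !inE; case: (X \in R); rewrite ?andbT.
Qed.

Lemma double_count {T : finType} (R : {set {set T}}) :
  \sum_(A : T) #|S_R R A| = \sum_(X in R) #|X|.
Proof.
transitivity (\sum_(A : T) \sum_(X in R) (A \in X : nat)).
  apply: eq_bigr => A _; rewrite -sum1_card big_mkcond /= [RHS]big_mkcond /=.
  by apply: eq_bigr => X _; rewrite /S_R !inE; case: (X \in R); case: (A \in X).
rewrite exchange_big /=; apply: eq_bigr => X _.
by rewrite -sum1_card [RHS]big_mkcond.
Qed.

Theorem proposition12 (T : finType) (n k : nat) (F : rel T)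
    (R : {set {set T}}) :
  simple_graph F ->
  #|T| = 'C(n, k) ->
  n = k.*2 ->
  reconstruction_family n k F R ->
  reconstruction_family n k F (compl_family R).
Proof.
move=> _ HT Hn [H1 H2 H3].
case: k Hn HT H1 H2 H3 => [|k] Hn HT H1 H2 H3.
  have R0 : R = set0.
    apply/setP => X; rewrite inE; apply/negP => XR.
    have : 0 < #|X| by rewrite H1 // Hn.
    case/card_gt0P => A AX.
    have : 0 < #|S_R R A| by apply/card_gt0P; exists X; rewrite inE XR AX.
    by rewrite H2.
  have C0 : compl_family R = set0 by rewrite /compl_family R0 imset0.
  have S0 : forall A : T, S_R (set0 : {set {set T}}) A = set0 by move=> A; apply/setP => X; rewrite !inE.
  rewrite C0; split => [X|A|A B _]; rewrite ?inE ?S0 ?setI0 ?cards0 //.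
have hR : #|R| = n.
  have E := double_count R.
  rewrite (eq_bigr (fun _ => k.+1)) // sum_nat_const in E.
  rewrite (eq_bigr (fun _ => 'C(n.-1, k))) in E; last by move=> X; exact: H1.
  rewrite sum_nat_const HT /= in E.
  have Cpos : 0 < 'C(n.-1, k) by rewrite bin_gt0 Hn; lia.
  have := mul_bin_diag n k; rewrite mulnC [k.+1 * _]mulnC E => E2.
  by apply/eqP; rewrite -(eqn_pmul2l Cpos) E2 mulnC.
split.
- move=> Y /imsetP [X XR ->].
  have := cardsC X; rewrite H1 // HT => E.
  have : 'C(n, k.+1) = 'C(n.-1, k.+1) + 'C(n.-1, k) by rewrite Hn /= binS.
  have : 'C(n.-1, k.+1) = 'C(n.-1, k).
    rewrite -bin_sub; last by rewrite Hn; lia.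
    by congr 'C(_, _); rewrite Hn; lia.
  move=> H5 H6; rewrite /= in E *; lia.
- by move=> A; rewrite card_SC hR H2 Hn; lia.
- move=> A B FAB; rewrite card_SCI hR !H2 H3 //= Hn; lia.
Qed.
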